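(* Let $G$ be a locally compact, Hausdorff, étale groupoid and $\alpha$ an automorphism of $G$. The following are equivalent: (1) $G^\infty_\alpha$ is principal; (2) $G$ is principal and, whenever $x \in G^{(0)}$ and $l\in\mathbb{Z}$ satisfy $[x] = [\alpha^l(x)]$, we have $l = 0$.
   Context: Let $E$ be the directed graph with one vertex $v$ and countably infinitely many edges $e_1,e_2,\dots$. Let $E^*$ be its finite paths (including $v$), $E^\infty$ its infinite paths, $P = E^*\sqcup E^\infty$, $|\mu|$ the length. $H_\infty$ is the groupoid $\{(\alpha x, |\alpha|-|\beta|, \beta x) : x\in P, \alpha,\beta\in E^*\}\subseteq P\times\mathbb{Z}\times P$ with $(x,m,y)(y,n,z)=(x,m+n,z)$, $(x,m,y)^{-1}=(y,-m,x)$, unit space identified with $P$, topology generated by the sets $Z((\alpha,\beta)\setminus F)=\{(\alpha x,|\alpha|-|\beta|,\beta x): x\in P, x\text{ does not begin with an edge in }F\}$ ($F$ finite); $c(x,m,y)=m$. An automorphism is a structure-preserving homeomorphism. $G^\infty_\alpha$ is $H_\infty\times G$ with product topology, unit space $H_\infty^{(0)}\times G^{(0)}$, $r(h,g)=(r(h),r(g))$, $s(h,g)=(s(h),\alpha^{c(h)}(s(g)))$, product $(h_1,g_1)(h_2,g_2)=(h_1h_2,g_1\alpha^{-c(h_1)}(g_2))$, inverse $(h,g)^{-1}=(h^{-1},\alpha^{c(h)}(g^{-1}))$. A groupoid is principal if $g\mapsto(r(g),s(g))$ is injective. For $u\in G^{(0)}$, $[u] = \{r(g) : s(g) = u\}$.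 *)

(* Defs.v *)
From mathcomp Require Import all_boot all_order all_algebra.
From mathcomp Require Import all_classical all_reals all_analysis.
Set Implicit Arguments. Unset Strict Implicit. Unset Printing Implicit Defensive.
Import Order.TTheory GRing.Theory Num.Theory.
Local Open Scope classical_set_scope.
Local Open Scope ring_scope.

(* ---------- groupoids (unit space = subset of the arrows) ---------- *)
Record groupoid (T : Type) := Groupoid {
  rg : T -> T;  sg : T -> T;
  mulg : T -> T -> T;  (* meaningful only on composable pairs sg g = rg h *)
  invg : T -> T;
  rg_unit : forall g, rg (rg g) = rg g /\ sg (rg g) = rg g;
  sg_unit : forall g, rg (sg g) = sg g /\ sg (sg g) = sg g;
  rg_mul : forall g h, sg g = rg h -> rg (mulg g h) = rg g;
  sg_mul : forall g h, sg g = rg h -> sg (mulg g h) = sg h;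
  mulA : forall g h k, sg g = rg h -> sg h = rg k ->
           mulg (mulg g h) k = mulg g (mulg h k);
  mul_rg : forall g, mulg (rg g) g = g;
  mul_sg : forall g, mulg g (sg g) = g;
  rg_inv : forall g, rg (invg g) = sg g;
  sg_inv : forall g, sg (invg g) = rg g;
  mulV : forall g, mulg g (invg g) = rg g;
  mulVg : forall g, mulg (invg g) g = sg g
}.

Definition unit_space (T : Type) (G : groupoid T) : set T :=
  [set u | rg G u = u].

Definition principal (X Y : Type) (r s : X -> Y) : Prop :=
  forall g h, (r g, s g) = (r h, s h) -> g = h.

Definition gorbit (T : Type) (G : groupoid T) (u : T) : set T :=
  [set rg G g | g in [set g | sg G g = u]].

Definition mul_continuous (T : topologicalType) (G : groupoid T) : Prop :=
  forall g h, sg G g = rg G h ->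
  forall W, nbhs (mulg G g h) W ->
  exists2 U, nbhs g U & exists2 V, nbhs h V &
    forall g' h', U g' -> V h' -> sg G g' = rg G h' -> W (mulg G g' h').

Definition topological_groupoid (T : topologicalType) (G : groupoid T) : Prop :=
  continuous (rg G) /\ continuous (sg G) /\ continuous (invg G) /\
  mul_continuous G.

Definition local_homeomorphism (T : topologicalType) (f : T -> T) : Prop :=
  continuous f /\
  forall g, exists U : set T, [/\ open U, U g,
    {in U &, injective f} &
    forall V, open V -> V `<=` U -> open (f @` V)].

Definition etale (T : topologicalType) (G : groupoid T) : Prop :=
  topological_groupoid G /\ local_homeomorphism (rg G).

Definition automorphism (T : topologicalType) (G : groupoid T)
    (a b : T -> T) : Prop :=
  [/\ cancel a b, cancel b a, continuous a, continuous b &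
    [/\ forall g, a (rg G g) = rg G (a g),
        forall g, a (sg G g) = sg G (a g),
        forall g, a (invg G g) = invg G (a g) &
        forall g h, sg G g = rg G h -> a (mulg G g h) = mulg G (a g) (a h)]].

Definition apow (T : Type) (a b : T -> T) (l : int) : T -> T :=
  match l with
  | Posz n => iter n a
  | Negz n => iter n.+1 b
  end.

(* ---------- the graph E (one vertex, edges e_0, e_1, ...) and H_infty ---------- *)
(* finite paths = seq nat (the vertex v is [::]); infinite paths = nat -> nat *)
Inductive epath : Type :=
| FinP of seq nat
| InfP of (nat -> nat).

Definition catp (al : seq nat) (x : epath) : epath :=
  match x with
  | FinP s => FinP (al ++ s)
  | InfP f => InfP (fun n => if (n < size al)%N then nth 0%N al n else f (n - size al)%N)
  end.

Definition Hinf_mem (h : epath * int * epath) : Prop :=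
  exists (z : epath) (al be : seq nat),
    [/\ h.1.1 = catp al z, h.2 = catp be z &
        h.1.2 = (size al)%:Z - (size be)%:Z].

Definition Hinf : Type := {h : epath * int * epath | Hinf_mem h}.

(* unit space of H_infty identified with P = epath *)
Definition Hr (h : Hinf) : epath := (proj1_sig h).1.1.
Definition Hs (h : Hinf) : epath := (proj1_sig h).2.
Definition Hc (h : Hinf) : int := (proj1_sig h).1.2.

(* G^infty_alpha = H_infty x G, with r and s as in the paper *)
Definition Ginf_r (T : Type) (G : groupoid T) (p : Hinf * T) : epath * T :=
  (Hr p.1, rg G p.2).
Definition Ginf_s (T : Type) (G : groupoid T) (a b : T -> T) (p : Hinf * T)
  : epath * T :=
  (Hs p.1, apow a b (Hc p.1) (sg G p.2)).

(* Main.v *)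
Require Import Defs.
From mathcomp Require Import all_boot all_order all_algebra.
From mathcomp Require Import all_classical all_reals all_analysis.
From mathcomp Require Import zify.
Import Order.TTheory GRing.Theory Num.Theory.
Local Open Scope classical_set_scope.
Local Open Scope ring_scope.

Section Aux.
Variables (T : Type) (a b : T -> T).
Hypotheses (ab : cancel a b) (ba : cancel b a).

Lemma apow_succ l x : apow a b (l + 1) x = a (apow a b l x).
Proof.
case: l => [n|n].
  by rewrite (_ : Posz n + 1 = Posz n.+1) /= ?iterS //; lia.
case: n => [|n]; first by rewrite /= ba.
have -> : Negz n.+1 + 1 = Negz n by rewrite !NegzE; lia.
by rewrite /= ba.
Qed.

Lemma apow_pred l x : apow a b (l - 1) x = b (apow a b l x).
Proof. by rewrite -{2}(subrK 1 l) apow_succ ab. Qed.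

Lemma apow_add n m x : apow a b (n + m) x = apow a b m (apow a b n x).
Proof.
case: m => [k|k].
  elim: k => [|k IH]; first by rewrite addr0.
  have -> : n + Posz k.+1 = (n + Posz k) + 1 by lia.
  by rewrite apow_succ IH.
elim: k => [|k IH].
  by rewrite (_ : Negz 0 = - 1) ?apow_pred.
have -> : n + Negz k.+1 = (n + Negz k) - 1 by rewrite !NegzE; lia.
by rewrite apow_pred IH.
Qed.

Lemma apowK n x : apow a b (- n) (apow a b n x) = x.
Proof. by rewrite -apow_add subrr. Qed.
End Aux.

Lemma gorbit_sr (T : Type) (G : groupoid T) g : gorbit G (sg G g) = gorbit G (rg G g).
Proof.
rewrite /gorbit; apply/seteqP; split => _ [k /= Hk <-].
  exists (mulg G k (invg G g)); last by rewrite rg_mul // rg_inv.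
  by rewrite /= sg_mul ?sg_inv // rg_inv.
exists (mulg G k g); last by rewrite rg_mul.
by rewrite /= sg_mul.
Qed.

Definition zpath : epath := InfP (fun _ => 0%N).

Lemma catp_z k : catp (nseq k 0%N) zpath = zpath.
Proof.
rewrite /catp /zpath; congr InfP; apply: funext => n.
by case: ifP => // _; rewrite nth_nseq; case: ifP.
Qed.

Lemma Hmem_z l : Hinf_mem ((zpath, l), zpath).
Proof.
have z0 : catp [::] zpath = zpath by exact: (catp_z 0).
case: l => [k|k].
  exists zpath, (nseq k 0%N), [::]; split; first by rewrite catp_z.
    by rewrite z0.
  by rewrite /= size_nseq subr0.
exists zpath, [::], (nseq k.+1 0%N); split; first by rewrite z0.
  by rewrite catp_z.
by rewrite /= size_nseq NegzE sub0r.
Qed.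

Definition Hz l : Hinf := exist _ _ (Hmem_z l).

Lemma Hinf_eq (h h' : Hinf) : proj1_sig h = proj1_sig h' -> h = h'.
Proof.
case: h h' => [v p] [v' p'] /= E; subst v'; by rewrite (Prop_irrelevance p p').
Qed.

Theorem proposition5p1 (T : topologicalType) (G : groupoid T) (a b : T -> T) :
  locally_compact [set: T] -> hausdorff_space T -> etale G ->
  automorphism G a b ->
  (principal (Ginf_r G) (Ginf_s G a b) <->
   principal (rg G) (sg G) /\
   (forall (x : T) (l : int), unit_space G x ->
      gorbit G x = gorbit G (apow a b l x) -> l = 0)).
Proof.
move=> _ _ _ [ab ba _ _ _]; split.
  move=> P; split.
    move=> g h [E1 E2]; have := P (Hz 0, g) (Hz 0, h).
    rewrite /Ginf_r /Ginf_s /= E1 E2 => /(_ erefl); by case.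
  move=> x l ux Eo.
  have sx : sg G x = x by rewrite -{1}ux (proj2 (rg_unit G x)).
  have : gorbit G x x by exists x.
  rewrite Eo => -[g /= Hg Hrg].
  have := P (Hz l, invg G g) (Hz 0, sg G g).
  rewrite /Ginf_r /Ginf_s /Hr /Hs /Hc /= rg_inv sg_inv Hrg.
  rewrite (proj1 (sg_unit G g)) (proj2 (sg_unit G g)) Hg.
  move=> /(_ erefl) E; have := congr1 (fun p => Hc p.1) E; done.
move=> [PG Po] [h g] [h' g'].
rewrite /Ginf_r /Ginf_s /= => -[[E1 E2] [E3 E4]].
set c := Hc h in E4; set c' := Hc h' in E4.
have Eu : apow a b (c - c') (sg G g) = sg G g'.
  by rewrite apow_add // E4 apowK.
have Ec : c = c'.
  apply/eqP; rewrite -subr_eq0; apply/eqP; apply: (Po (sg G g)).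
    by rewrite /unit_space /= (proj1 (sg_unit G g)).
  by rewrite Eu !gorbit_sr E2.
have Es : sg G g = sg G g'.
  by rewrite -(@apowK _ _ _ ab ba c (sg G g)) E4 -Ec apowK.
have -> : g = g' by apply: PG; rewrite E2 Es.
suff -> : h = h' by [].
apply: Hinf_eq.
move: E1 E3 Ec; rewrite /c /c' /Hr /Hs /Hc; clear c c' E4 Eu Es.
case: (proj1_sig h) => [[x m] y]; case: (proj1_sig h') => [[x' m'] y'] /= -> -> -> //.
Qed.
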